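(* Let $f:\mathbb R^n\to\mathbb R$ be convex, differentiable and $L$-Lipschitz smooth, $g:\mathbb R^n\to\mathbb R\cup\{+\infty\}$ proper, closed and convex, $F=f+g$. Let $(\alpha_k)_{k\ge0}\subseteq(0,1]$, $(B_k)_{k\ge0}\subseteq(0,\infty)$, $(\rho_k)_{k\ge0}\subseteq[0,\infty)$, $(\epsilon_k)_{k\ge0}\subseteq(0,\infty)$, and $L_k=B_k+\rho_k$. Given $x_{-1},x^\circ_{-1}\in\mathbb R^n$, let $(y_k,x_k,x^\circ_k)_{k\ge0}$ satisfy for all $k\ge0$: $y_k=\alpha_kx^\circ_{k-1}+(1-\alpha_k)x_{k-1}$; $x_k\approx_{\epsilon_k}T_{L_k}(y_k)$; $D_f(x_k,y_k)\le\frac{B_k}2\|x_k-y_k\|^2$; $x^\circ_k=x_{k-1}+\alpha_k^{-1}(x_k-x_{k-1})$. Then for any $\bar x\in\mathbb R^n$ and all $k\ge0$, $$\frac{\rho_k}2\|x_k-y_k\|^2-\epsilon_k\le(1-\alpha_k)(F(x_{k-1})-F(\bar x))+F(\bar x)-F(x_k)+\frac{\alpha_k^2L_k}2\|\bar x-x^\circ_{k-1}\|^2-\frac{\alpha_k^2L_k}2\|\bar x-x^\circ_k\|^2.$$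
   Context: $D_f(u,w)=f(u)-f(w)-\langle\nabla f(w),u-w\rangle$; $L$-Lipschitz smooth means $D_f(u,w)\le\frac L2\|u-w\|^2$ for all $u,w$. For proper $h$, $\epsilon\ge0$: $\partial_\epsilon h(\bar x)=\{v:\langle v,u-\bar x\rangle\le h(u)-h(\bar x)+\epsilon\ \forall u\}$ for $\bar x\in\operatorname{dom}h$, $\emptyset$ otherwise. $\tilde x\approx_\epsilon T_\rho(x)$ means $\mathbf 0\in\nabla f(x)-\rho(x-\tilde x)+\partial_\epsilon g(\tilde x)$. *)

(* Defs.v *)
From HB Require Import structures.
From mathcomp Require Import all_boot all_order all_algebra.
From mathcomp Require Import all_classical all_reals all_analysis.
Set Implicit Arguments. Unset Strict Implicit. Unset Printing Implicit Defensive.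
Import Order.TTheory GRing.Theory Num.Theory.
Import numFieldNormedType.Exports.
Local Open Scope ring_scope.

Section Defs.
Variables (R : realType) (n : nat).
Notation V := 'rV[R]_n.

Definition dotv (u v : V) : R := \sum_(i < n) u 0 i * v 0 i.
Definition sqnorm (u : V) : R := dotv u u.

Definition grad (f : V -> R) (x : V) : V :=
  \row_(i < n) ('d f x (delta_mx 0 i : V)).

Definition differentiable_everywhere (f : V -> R) := forall x : V, differentiable f x.

Definition convex_fun (f : V -> R) :=
  forall (x y : V) (t : R), 0 <= t <= 1 ->
    f (t *: x + (1 - t) *: y) <= t * f x + (1 - t) * f y.

Definition bregman (f : V -> R) (u w : V) : R :=
  f u - f w - dotv (grad f w) (u - w).

Definition lipschitz_smooth (f : V -> R) (L : R) :=
  forall u w : V, bregman f u w <= L / 2 * sqnorm (u - w).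

Definition proper_fun (g : V -> \bar R) :=
  (forall x, g x != -oo%E) /\ exists x, g x \is a fin_num.

Definition closed_fun (g : V -> \bar R) := lower_semicontinuous g.

Definition convex_efun (g : V -> \bar R) :=
  forall (x y : V) (t : R), 0 <= t <= 1 ->
    (g (t *: x + (1 - t) *: y)%R <= t%:E * g x + (1 - t)%R%:E * g y)%E.

Definition esubdiff (h : V -> \bar R) (eps : R) (xb : V) (v : V) : Prop :=
  h xb \is a fin_num /\
  forall u : V, ((dotv v (u - xb)%R)%:E <= h u - h xb + eps%:E)%E.

(* xt ~_eps T_rho(x) : 0 \in grad f x - rho (x - xt) + \partial_eps g (xt) *)
Definition approx_prox (f : V -> R) (g : V -> \bar R) (rho eps : R) (x xt : V) :=
  exists v : V, esubdiff g eps xt v /\ grad f x - rho *: (x - xt) + v = 0.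

(* sequence shifted by one with initial value s_{-1} = s0: prevs s0 s k = s_{k-1} *)
Definition prevs (s0 : V) (s : nat -> V) (k : nat) : V :=
  if k is k'.+1 then s k' else s0.

End Defs.

(* Main.v *)
Require Import Defs.
From HB Require Import structures.
From mathcomp Require Import all_boot all_order all_algebra.
From mathcomp Require Import all_classical all_reals all_analysis.
From mathcomp Require Import ring lra.
Import Order.TTheory GRing.Theory Num.Theory.
Import numFieldNormedType.Exports.
Local Open Scope ring_scope.

Section Dot.
Variables (R : realType) (n : nat).
Implicit Types u v w : 'rV[R]_n.
Lemma dotvC u v : dotv u v = dotv v u.
Proof. by apply: eq_bigr => i _; rewrite mulrC. Qed.
Lemma dotvDl u v w : dotv (u + v) w = dotv u w + dotv v w.
Proof. by rewrite /dotv -big_split; apply: eq_bigr => i _; rewrite mxE mulrDl. Qed.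
Lemma dotvZl (a : R) u w : dotv (a *: u) w = a * dotv u w.
Proof. by rewrite /dotv mulr_sumr; apply: eq_bigr => i _; rewrite mxE mulrA. Qed.
Lemma dotvNl u w : dotv (- u) w = - dotv u w.
Proof. by rewrite -scaleN1r dotvZl mulN1r. Qed.
Lemma dotvBl u v w : dotv (u - v) w = dotv u w - dotv v w.
Proof. by rewrite dotvDl dotvNl. Qed.
Lemma dotvDr u v w : dotv w (u + v) = dotv w u + dotv w v.
Proof. by rewrite dotvC dotvDl !(dotvC w). Qed.
Lemma dotvZr (a : R) u w : dotv w (a *: u) = a * dotv w u.
Proof. by rewrite dotvC dotvZl dotvC. Qed.
Lemma dotvNr u w : dotv w (- u) = - dotv w u.
Proof. by rewrite dotvC dotvNl dotvC. Qed.
Lemma dotvBr u v w : dotv w (u - v) = dotv w u - dotv w v.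
Proof. by rewrite dotvDr dotvNr. Qed.
End Dot.

Local Open Scope classical_set_scope.
Lemma dot_grad (R : realType) (n : nat) (f : 'rV[R]_n -> R) y d :
  dotv (grad f y) d = 'd f y d.
Proof.
rewrite /dotv /grad [in RHS](row_sum_delta d) linear_sum /=.
apply: eq_bigr => i _; rewrite mxE linearZ /= mulrC.
by [].
Qed.

Lemma grad_ineq (R : realType) (n : nat) (f : 'rV[R]_n -> R) y z :
  convex_fun f -> differentiable_everywhere f ->
  f y + dotv (grad f y) (z - y) <= f z.
Proof.
move=> cvx df; rewrite dot_grad -deriveE; last exact: df.
rewrite -lerBrDl.
have dv : derivable f y (z - y) by exact: diff_derivable.
rewrite /derive cvg_at_rightE //.
apply: limr_le.
  apply/cvg_ex; exists (lim ((fun h : R => h^-1 *: ((f \o shift y) (h *: (z - y)) - f y)) @ 0^')).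
  move=> A /dv /nbhs_ballP [_ /posnumP[e] xe_A].
  by exists e%:num => //= w xe_w; rewrite lt_def => /andP [xney _]; apply: xe_A.
near=> h.
have h0 : 0 < h by near: h; exact: nbhs_right_gt.
have h1 : h < 1 by near: h; exact: nbhs_right_lt.
rewrite /= /shift.
have -> : h *: (z - y) + y = h *: z + (1 - h) *: y.
  by apply/rowP => j; rewrite !mxE; ring.
have := cvx z y h; rewrite (ltW h0) (ltW h1) /= => /(_ isT) H.
rewrite -[leRHS](mulKf (lt0r_neq0 h0)) /GRing.scale /= ler_pM2l ?invr_gt0 //.
rewrite lerBlDl; apply: (le_trans H); rewrite mulrBl mul1r; lra.
Unshelve. all: by end_near.
Qed.

Local Close Scope classical_set_scope.

Theorem lemma3p2 (R : realType) (n : nat)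
  (f : 'rV[R]_n -> R) (g : 'rV[R]_n -> \bar R) (L : R)
  (alpha B rho eps : nat -> R)
  (xm1 xom1 : 'rV[R]_n) (y x xo : nat -> 'rV[R]_n) :
  convex_fun f -> differentiable_everywhere f -> lipschitz_smooth f L ->
  proper_fun g -> closed_fun g -> convex_efun g ->
  (forall k, 0 < alpha k <= 1) ->
  (forall k, 0 < B k) -> (forall k, 0 <= rho k) -> (forall k, 0 < eps k) ->
  (forall k, y k = alpha k *: prevs xom1 xo k + (1 - alpha k) *: prevs xm1 x k) ->
  (forall k, approx_prox f g (B k + rho k) (eps k) (y k) (x k)) ->
  (forall k, bregman f (x k) (y k) <= B k / 2 * sqnorm (x k - y k)) ->
  (forall k, xo k = prevs xm1 x k + (alpha k)^-1 *: (x k - prevs xm1 x k)) ->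
  let F := fun u => ((f u)%:E + g u)%E in
  forall xbar : 'rV[R]_n, g xbar \is a fin_num ->
  forall k : nat,
    ((rho k / 2 * sqnorm (x k - y k) - eps k)%:E <=
      (1 - alpha k)%:E * (F (prevs xm1 x k) - F xbar) + F xbar - F (x k)
      + (alpha k ^+ 2 * (B k + rho k) / 2 * sqnorm (xbar - prevs xom1 xo k))%:E
      - (alpha k ^+ 2 * (B k + rho k) / 2 * sqnorm (xbar - xo k))%:E)%E.
Proof.
move=> cvx df _ [gnm _] _ cvg Ha HB Hr He Hy Hap Hbr Hxo F xbar gbf k.
move: (Ha k) (HB k) (Hr k) (He k) (Hy k) (Hap k) (Hbr k) (Hxo k).
clear Ha HB Hr He Hy Hap Hbr Hxo.
move: (alpha k) (B k) (rho k) (eps k) (prevs xom1 xo k) (prevs xm1 x k) (y k) (x k) (xo k).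
move=> a b r e xop xp yk xk xok /andP[a0 a1] b0 r0 e0 Hy [v [[gxf Hs] Hv]] Hbr Hxo.
have an0 : a != 0 by rewrite gt_eqF.
set z := a *: xbar + (1 - a) *: xp.
set G := grad f yk.
have [P EP] : exists P, P = xbar - xok by eexists.
have [D ED] : exists D, D = xop - xok by eexists.
have E1 : xk - yk = - (a *: D).
  rewrite ED Hy Hxo; apply/rowP => j; rewrite !mxE; by field.
have E2 : z - xk = a *: P.
  rewrite EP Hxo; apply/rowP => j; rewrite !mxE; by field.
have E3 : z - yk = a *: (P - D).
  rewrite EP ED Hy Hxo; apply/rowP => j; rewrite !mxE; by field.
have E4 : xbar - xop = P - D.
  rewrite EP ED; apply/rowP => j; rewrite !mxE; by field.
have Ev : v = (b + r) *: (a *: D) - G.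
  have -> : a *: D = yk - xk by rewrite -opprB E1 opprK.
  apply/rowP => j; have := congr1 (fun M : 'rV[R]_n => M 0 j) Hv; rewrite !mxE /=; lra.
have Hgr := @grad_ineq _ _ f yk z cvx df.
have Hf : f z <= a * f xbar + (1 - a) * f xp.
  by apply: cvx; rewrite (ltW a0) a1.
have Hg := cvg xbar xp a; rewrite (ltW a0) a1 /= in Hg; have {}Hg := Hg isT.
have Hsz := Hs z.
have Egb : g xbar = (fine (g xbar))%:E by rewrite fineK.
have Egx : g xk = (fine (g xk))%:E by rewrite fineK.
move: (fine (g xbar)) (fine (g xk)) Egb Egx => gb gx Egb Egx.
have [Hinf | [c [Ec Egz]]] : ((1 - a)%:E * (F xp - F xbar) + F xbar - F xk
      + (a ^+ 2 * (b + r) / 2 * sqnorm (xbar - xop))%:E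
      - (a ^+ 2 * (b + r) / 2 * sqnorm (xbar - xok))%:E = +oo)%E \/
    exists c, ((1 - a)%:E * (F xp - F xbar) = (c + (1-a)*(f xp - f xbar - gb))%:E /\
      (g z <= (a*gb + c)%:E))%E.
  have [ha|ha] := ltP a 1.
    case Egp: (g xp) => [rr| |].
    - right; exists ((1-a)*rr); split.
        rewrite /F Egp Egb /=; congr (_%:E); ring.
      by move: Hg; rewrite Egb Egp -!EFinM -EFinD.
    - left; rewrite /F Egp Egb Egx addey // addye // gt0_muley ?lte_fin ?subr_gt0 //.
    - by have := gnm xp; rewrite Egp.
  have a1' : a = 1 by apply/eqP; rewrite eq_le a1 ha.
  right; exists 0; split.
    by rewrite a1' subrr mul0e mul0r addr0.
  by apply: (le_trans Hg); rewrite a1' subrr mul0e mul1e adde0 Egb mul1r addr0.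
  by rewrite Hinf leey.
rewrite Ec /F Egb Egx.
have gzf : g z \is a fin_num.
  rewrite fin_numE gnm /=; apply/negP => /eqP Hz; move: Egz; rewrite Hz.
  by rewrite leNgt ltey.
have Egz' : g z = (fine (g z))%:E by rewrite fineK.
move: (fine (g z)) Egz' => gz Egz'.
rewrite Egz' Egx -EFinB -EFinD lee_fin in Hsz.
rewrite Egz' lee_fin in Egz.
rewrite -?EFinD -?EFinB -?EFinD -?EFinB -?EFinD -?EFinB lee_fin.
rewrite E1 E4 -EP.
rewrite Ev E2 in Hsz.
rewrite -/G E3 in Hgr.
rewrite /bregman -/G E1 in Hbr.
move: Hsz Hgr Hbr; rewrite /sqnorm
  !(dotvNl, dotvNr, dotvZl, dotvZr, dotvBl, dotvBr, dotvDl, dotvDr) [dotv D P]dotvC.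
move=> Hsz Hgr Hbr.
move: (dotv G P) (dotv G D) (dotv P D) (dotv D D) (dotv P P) Hsz Hgr Hbr => gP gD pd dd pp Hsz Hgr Hbr.
rewrite expr2; lra.
Qed.
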